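(* Let $(L,\wedge,\vee,0,1)$ be a bounded lattice. Then its multiplicative Nakano mosaic $(L,\boxdot,1)$, where $x\boxdot y:=\{z\in L\mid x\wedge y=x\wedge z=z\wedge y\}$, is an L-mosaic (with neutral element $1$ playing the role of $0$ in the definition).
   Context: For a multioperation $\boxdot:A\times A\to\wp(A)$ and subsets $X,Y$, $X\boxdot Y:=\bigcup_{x\in X,y\in Y}x\boxdot y$. A commutative mosaic $(A,\boxdot,e)$: $x\boxdot y=y\boxdot x$, $e\boxdot x=\{x\}$ for all $x$, and for some endofunction $\rho$, $z\in x\boxdot y$ implies $x\in z\boxdot\rho(y)$ and $y\in\rho(x)\boxdot z$. An L-mosaic is a commutative mosaic $(A,\boxdot,e)$ such that: (Lms1) $e,x\in x\boxdot x$ for all $x$; (Lms2) $(x\boxdot x)\boxdot(x\boxdot x)=x\boxdot x$; (Lms3) $(x\boxdot(x\boxdot y))\cap((x\boxdot y)\boxdot y)\subseteq x\boxdot y$; (Lms4) for all $x,y$ there is a unique $z\in x\boxdot y$ with $x,y\in z\boxdot z$. *)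

(* Defs.v *)
From HB Require Import structures.
From mathcomp Require Import all_boot all_order.
Set Implicit Arguments. Unset Strict Implicit. Unset Printing Implicit Defensive.
Import Order.TTheory.
Local Open Scope order_scope.

Definition mset (A : Type) := A -> Prop.

(* A multioperation A x A -> P(A): (m x y z) means z \in x [.] y. *)
Definition multiop (A : Type) := A -> A -> mset A.

Definition mseteq (A : Type) (X Y : mset A) : Prop := forall z, X z <-> Y z.

Definition mlift (A : Type) (m : multiop A) (X Y : mset A) : mset A :=
  fun z => exists x y, X x /\ Y y /\ m x y z.

Definition msing (A : Type) (a : A) : mset A := fun z => z = a.

Definition msubset (A : Type) (X Y : mset A) : Prop := forall z, X z -> Y z.

Definition mcap (A : Type) (X Y : mset A) : mset A := fun z => X z /\ Y z.

Definition commutative_mosaic (A : Type) (m : multiop A) (e : A) : Prop :=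
  (forall x y, mseteq (m x y) (m y x)) /\
  (forall x, mseteq (m e x) (msing x)) /\
  (exists rho : A -> A, forall x y z,
      m x y z -> m z (rho y) x /\ m (rho x) z y).

Definition L_mosaic (A : Type) (m : multiop A) (e : A) : Prop :=
  commutative_mosaic m e /\
  (forall x, m x x e /\ m x x x) /\
  (forall x, mseteq (mlift m (m x x) (m x x)) (m x x)) /\
  (forall x y, msubset (mcap (mlift m (msing x) (m x y))
                             (mlift m (m x y) (msing y)))
                       (m x y)) /\
  (forall x y, exists! z, m x y z /\ m z z x /\ m z z y).

Definition nakano_mul (d : Order.disp_t) (L : latticeType d) : multiop L :=
  fun x y z => x `&` y = x `&` z /\ x `&` z = z `&` y.

(* Main.v *)
Require Import Defs.
From HB Require Import structures.
From mathcomp Require Import all_boot all_order.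
Local Open Scope order_scope.
Import Order.TTheory.

Section S.
Context {d : Order.disp_t} {L : tbLatticeType d}.
Implicit Types x y z : L.

Lemma nk_le x y z : nakano_mul x y z -> x `&` y <= z.
Proof. by move=> [-> _]; exact: leIr. Qed.

Lemma nk_xx x z : nakano_mul x x z <-> x <= z.
Proof.
rewrite /nakano_mul meetxx; split.
  by move=> [H _]; apply/meet_idPl; rewrite -H.
by move/meet_idPl=> H; rewrite H meetC H.
Qed.

Lemma nk_meet x y : nakano_mul x y (x `&` y).
Proof. by rewrite /nakano_mul meetKI meetIK. Qed.
End S.
Arguments nk_le {d L x y z}.

Theorem mainTheorem9 (d : Order.disp_t) (L : tbLatticeType d) :
  L_mosaic (@nakano_mul d L) \top.
Proof.
split; [|split; [|split; [|split]]].
- split; [|split].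
  + move=> x y z; rewrite /nakano_mul [y `&` x]meetC [z `&` x]meetC [y `&` z]meetC.
    by split; move=> [H1 H2]; split; congruence.
  + move=> x z; rewrite /nakano_mul /msing !meet1x; split.
      by move=> [H1 H2]; rewrite -H1.
    by move=> ->; rewrite meetxx.
  + exists id => x y z; rewrite /nakano_mul /= => [[H1 H2]].
    have C1 := meetC z x; have C2 := meetC y z.
    by split; split; congruence.
- by move=> x; split; apply/nk_xx; rewrite ?lex1.
- move=> x z; split.
  + move=> [a [b [/nk_xx Ha [/nk_xx Hb Hz]]]]; apply/nk_xx.
    have Hab : x <= a `&` b by rewrite lexI Ha Hb.
    have H2 := nk_le Hz.

    exact: (le_trans Hab H2).
  + move=> /nk_xx Hz; exists z, z; split; [by apply/nk_xx|split; [by apply/nk_xx|]].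
    by apply/nk_xx.
- move=> x y z [[x' [w [-> [[H1 H2] [H3 H4]]]]] [w' [y' [[H5 H6] [-> [H7 H8]]]]]].
  rewrite /nakano_mul; split; congruence.
- move=> x y; exists (x `&` y); split.
    by split; [exact: nk_meet|split; apply/nk_xx; rewrite ?leIl ?leIr].
  move=> z [Hz [/nk_xx Hx /nk_xx Hy]]; apply/le_anti.
  by rewrite lexI Hx Hy (nk_le Hz).
Qed.
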